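(* Let $S=[S_1,\ldots,S_m]$ be a sequence of formulas and $I,J$ models. Then $I \equiv_{\emptyset S} J$ holds if and only if $I \equiv_{\emptyset Q} J$ holds for every formula $Q=(B_1\equiv S_1)\wedge\cdots\wedge(B_m\equiv S_m)$ with each $B_i\in\{\mathsf{true},\mathsf{false}\}$.
   Context: Propositional models are truth assignments over a finite set of variables; a formula used where a set of models is expected stands for its set of models. A doxastic state is a sequence $C=[C(0),\ldots,C(m)]$ of nonempty, pairwise disjoint sets of models covering all models; $I\le_C J$ iff $I\in C(i)$, $J\in C(j)$ with $i\le j$; $I\equiv_C J$ iff $I\le_C J$ and $J\le_C I$. The flat doxastic state $\emptyset$ is $[\text{all models}]$. Lexicographic revision: $C\,\mathrm{lex}(A) = [C(0)\cap A,\ldots,C(m)\cap A, C(0)\setminus A,\ldots,C(m)\setminus A]$, empty sets discarded. For a sequence of formulas $S=[S_1,\ldots,S_m]$, $\emptyset S$ denotes $\emptyset$ revised lexicographically by $S_1$, then $S_2$, ..., then $S_m$ ($\emptyset[\,]=\emptyset$); for a formula $Q$, $\emptyset Q$ denotes $\emptyset[Q]$. *)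

(* Defs.v *)
From mathcomp Require Import all_boot.
Set Implicit Arguments. Unset Strict Implicit. Unset Printing Implicit Defensive.

Definition model (n : nat) := {ffun 'I_n -> bool}.

Inductive formula (n : nat) : Type :=
| FVar of 'I_n
| FTrue
| FFalse
| FNot of formula n
| FAnd of formula n & formula n
| FOr of formula n & formula n
| FImp of formula n & formula n
| FIff of formula n & formula n.
Arguments FTrue {n}. Arguments FFalse {n}.

Fixpoint holds n (I : model n) (F : formula n) : bool :=
  match F with
  | FVar i => I i
  | FTrue => true
  | FFalse => false
  | FNot G => ~~ holds I G
  | FAnd G H => holds I G && holds I H
  | FOr G H => holds I G || holds I H
  | FImp G H => holds I G ==> holds I H
  | FIff G H => holds I G == holds I H
  end.

Definition mods n (F : formula n) : {set model n} := [set I | holds I F].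

(* Doxastic states: sequences of sets of models (partition in order). *)
Definition doxstate n := seq {set model n}.

Definition dle n (C : doxstate n) (I J : model n) : Prop :=
  exists i j, i <= j /\ I \in nth set0 C i /\ J \in nth set0 C j.

Definition dequiv n (C : doxstate n) (I J : model n) : Prop :=
  dle C I J /\ dle C J I.

Definition flat n : doxstate n := [:: [set: model n]].

Definition lex n (C : doxstate n) (A : formula n) : doxstate n :=
  [seq X <- [seq c :&: mods A | c <- C] ++ [seq c :\: mods A | c <- C]
     | X != set0].

(* emptyset S : flat state revised by S_1, then S_2, ..., then S_m. *)
Definition revseq n (S : seq (formula n)) : doxstate n := foldl (@lex n) (flat n) S.

(* Q = (B_1 == S_1) /\ ... /\ (B_m == S_m), with B_i in {true,false};
   the empty conjunction is true. *)
Definition bconst n (b : bool) : formula n := if b then FTrue else FFalse.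

Fixpoint signQ n (B : seq bool) (S : seq (formula n)) : formula n :=
  match B, S with
  | [:: b], [:: s] => FIff (bconst n b) s
  | b :: B', s :: S' => FAnd (FIff (bconst n b) s) (signQ B' S')
  | _, _ => FTrue
  end.

(* Main.v *)
Require Import Defs.
From mathcomp Require Import all_boot.
Set Implicit Arguments. Unset Strict Implicit. Unset Printing Implicit Defensive.

Definition vec n (S : seq (formula n)) (I : model n) := [seq holds I s | s <- S].

Lemma vec_rcons n (S : seq (formula n)) A I :
  vec (rcons S A) I = rcons (vec S I) (holds I A).
Proof. by rewrite /vec map_rcons. Qed.

Definition Inv n (C : doxstate n) (S : seq (formula n)) :=
  uniq C /\ (forall I, exists2 X, X \in C & I \in X) /\
  (forall X Y I J, X \in C -> Y \in C -> I \in X -> J \in Y ->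
     (X = Y <-> vec S I = vec S J)).

Lemma Inv_flat n : Inv (flat n) [::].
Proof.
split => //; split.
  by move=> I; exists [set: model n]; rewrite ?inE.
by move=> X Y I J; rewrite !inE => /eqP -> /eqP -> _ _.
Qed.

Lemma Inv_lex n (C : doxstate n) S A : Inv C S -> Inv (lex C A) (rcons S A).
Proof.
case=> [uC [cov sep]]; split.
  rewrite /lex filter_cat cat_uniq; apply/and3P; split.
  - rewrite filter_map map_inj_in_uniq ?filter_uniq // => X Y.
    rewrite !mem_filter /= => /andP [/set0Pn [K KX] XC] /andP [_ YC] E.
    move: (KX); rewrite E => KY; rewrite !inE in KX KY.
    case/andP: KX => KX _; case/andP: KY => KY _.
    by apply/(sep X Y K K).
  - apply/hasPn => Z; rewrite mem_filter => /andP [/set0Pn [K KZ] /mapP [X XC EZ]].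
    rewrite mem_filter negb_and; apply/orP; right; apply/negP => /mapP [Y YC EZ'].
    have h1 : K \in X :\: mods A by rewrite -EZ.
    have h2 : K \in Y :&: mods A by rewrite -EZ'.
    rewrite !inE in h1 h2; case/andP: h1 => h1 _; case/andP: h2 => _ h2.
    by rewrite h2 in h1.
  - rewrite filter_map map_inj_in_uniq ?filter_uniq // => X Y.
    rewrite !mem_filter /= => /andP [/set0Pn [K KX] XC] /andP [_ YC] E.
    move: (KX); rewrite E => KY; rewrite !inE in KX KY.
    case/andP: KX => _ KX; case/andP: KY => _ KY.
    by apply/(sep X Y K K).
  split.
  move=> I; have [X XC IX] := cov I.
  case hA: (I \in mods A).
    exists (X :&: mods A); last by rewrite inE IX hA.
    rewrite mem_filter mem_cat; apply/andP; split.
      by apply/set0Pn; exists I; rewrite inE IX hA.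
    by rewrite (map_f (fun c => c :&: mods A)).
  exists (X :\: mods A); last by rewrite inE IX hA.
  rewrite mem_filter mem_cat; apply/andP; split.
    by apply/set0Pn; exists I; rewrite inE IX hA.
  by rewrite (map_f (fun c => c :\: mods A)) ?orbT.
have memP : forall X', X' \in lex C A -> exists X b, [/\ X \in C,
     X' = (if b then X :&: mods A else X :\: mods A) &
     forall K, K \in X' -> (K \in X) && ((K \in mods A) == b)].
  move=> X'; rewrite mem_filter mem_cat => /andP [_ /orP [] /mapP [X XC ->]].
    by exists X, true; split => // K; rewrite inE eqb_id.
  by exists X, false; split => // K; rewrite inE andbC eqbF_neg.
move=> X' Y' I J /memP [X [b [XC eX hX]]] /memP [Y [c [YC eY hY]]] IX JY.
rewrite !vec_rcons; split.
  move=> E; rewrite -E in JY.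
  have /andP [IX1 /eqP hb] := hX _ IX.
  have /andP [JX1 /eqP hc] := hX _ JY.
  have -> : vec S I = vec S J by apply/(sep X X).
  by move: hb hc; rewrite !inE => -> ->.
move/eqP; rewrite eqseq_rcons => /andP [/eqP hv /eqP hh].
have /andP [IX1 /eqP hb] := hX _ IX.
have /andP [JY1 /eqP hc] := hY _ JY.
have XY : X = Y by apply/(sep X Y I J).
rewrite !inE in hb hc.
have bc : b = c by rewrite -hb -hc.
by rewrite eX eY XY bc.
Qed.

Lemma Inv_revseq n (S : seq (formula n)) : Inv (revseq S) S.
Proof.
elim/last_ind: S => [|S A IH]; first exact: Inv_flat.
by rewrite /revseq foldl_rcons; apply: Inv_lex.
Qed.


Lemma dequiv_vec n (S : seq (formula n)) I J :
  dequiv (revseq S) I J <-> vec S I = vec S J.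
Proof.
have [uC [cov sep]] := Inv_revseq S.
have szn : forall k K, K \in nth set0 (revseq S) k -> k < size (revseq S).
  move=> k K; case: (ltnP k (size (revseq S))) => // hk.
  by rewrite nth_default // inE.
have eqi : forall k k' K, K \in nth set0 (revseq S) k ->
    K \in nth set0 (revseq S) k' -> k = k'.
  move=> k k' K h1 h2.
  have s1 := szn _ _ h1; have s2 := szn _ _ h2.
  apply/eqP; rewrite -(nth_uniq set0 s1 s2 uC); apply/eqP.
  by apply/(sep _ _ K K) => //; apply: mem_nth.
split.
  case=> [[i [j [hij [Ii Jj]]]] [j' [i' [hji [Jj' Ii']]]]].
  have e1 := eqi _ _ _ Ii Ii'; have e2 := eqi _ _ _ Jj Jj'; subst i' j'.
  have eij : i = j by apply/eqP; rewrite eqn_leq hij hji.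
  subst j.
  by apply/(sep _ _ I J (mem_nth _ (szn _ _ Ii)) (mem_nth _ (szn _ _ Jj)) Ii Jj).
move=> hv.
have [X XC IX] := cov I; have [Y YC JY] := cov J.
have XY : X = Y by apply/(sep X Y I J).
subst Y.
have hX : X = nth set0 (revseq S) (index X (revseq S)) by rewrite nth_index.
split; exists (index X (revseq S)), (index X (revseq S)); rewrite leqnn -hX; done.
Qed.

Lemma holds_signQ n (B : seq bool) (S : seq (formula n)) I :
  size B = size S -> holds I (signQ B S) = (B == vec S I).
Proof.
elim: B S => [|b B IH] [|s S] //= [hs].
case: B IH hs => [|b' B] IH hs.
  case: S hs => // _ /=.
  by rewrite /bconst eqseq_cons andbT; case: b.
case: S hs IH => [|s' S] // hs IH.
have h := IH (s' :: S) hs.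
change (((holds I (bconst n b) == holds I s) && holds I (signQ (b' :: B) (s' :: S))) = ([:: b, b' & B] == holds I s :: vec (s' :: S) I)).
rewrite h eqseq_cons /bconst.
by case: b.
Qed.

Theorem mainTheorem5 (n : nat) (S : seq (formula n)) (I J : model n) :
  dequiv (revseq S) I J <->
  (forall B : seq bool, size B = size S ->
     dequiv (revseq [:: signQ B S]) I J).
Proof.
split.
  move=> /dequiv_vec hv B hB; apply/dequiv_vec; rewrite /vec /=.
  by rewrite !holds_signQ // hv.
move=> H; apply/dequiv_vec.
have hB : size (vec S I) = size S by rewrite size_map.
have /dequiv_vec := H _ hB.
rewrite /vec /= !holds_signQ ?size_map // eqxx => -[] /esym /eqP.
done.
Qed.
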